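(* Let $a_1,\dots,a_n$ be pairwise distinct letters and let $\mathcal{G}=(N,T,P,S)$ be a context-free grammar in which every nonterminal is productive, every production has the form $A\to BC$, $A\to a_i$ or $A\to\varepsilon$ ($A,B,C\in N$), and $L(\mathcal{G})\subseteq a_1^*a_2^*\cdots a_n^*$. Let $\mathcal{G}'$ be obtained from $\mathcal{G}$ by adding the production $A\to\varepsilon$ for every $A\in N$. For $i\in[1,n]$ let $L_i=\{A\in N\mid A\Rightarrow^*_{\mathcal{G}'} a_iA\}$ and $R_i=\{A\in N\mid A\Rightarrow^*_{\mathcal{G}'} Aa_i\}$. Let $\mathcal{G}^\omega$ be the grammar over the new terminal letters $a_1^\omega,\dots,a_n^\omega$ obtained from $\mathcal{G}'$ by (i) removing all productions $A\to a_i$, (ii) adding $A\to a_i^\omega A$ for each $A\in L_i$, and (iii) adding $A\to A a_i^\omega$ for each $A\in R_i$. Then $a_1^\omega a_2^\omega\cdots a_n^\omega\in L(\mathcal{G}^\omega)$ if and only if $a_1^*a_2^*\cdots a_n^*\subseteq\downarrow L(\mathcal{G})$.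
   Context: $\downarrow L$ denotes the set of all (not necessarily contiguous) subwords of words in $L$. $A\Rightarrow^*_{\mathcal{G}'}w$ means that the sentential form $w\in(N\cup T)^*$ is derivable from $A$ in $\mathcal{G}'$. A nonterminal is productive if it derives some terminal word. *)

(* Defs.v *)
From mathcomp Require Import all_boot.
Set Implicit Arguments.
Unset Strict Implicit.
Unset Printing Implicit Defensive.

Inductive sym (N T : Type) := NT of N | Tm of T.
Arguments NT {N T}.
Arguments Tm {N T}.

Record grammar (N T : Type) := Grammar {
  start : N;
  prod : N -> seq (sym N T) -> Prop }.

Inductive step N T (G : grammar N T) : seq (sym N T) -> seq (sym N T) -> Prop :=
| step_intro u v A w : prod G A w -> step G (u ++ NT A :: v) (u ++ w ++ v).

Inductive derives N T (G : grammar N T) : seq (sym N T) -> seq (sym N T) -> Prop :=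
| der_refl x : derives G x x
| der_step x y z : step G x y -> derives G y z -> derives G x z.

Definition inL N T (G : grammar N T) (w : seq T) : Prop :=
  derives G [:: NT (start G)] (map Tm w).

Definition all_productive N T (G : grammar N T) : Prop :=
  forall A : N, exists w : seq T, derives G [:: NT A] (map Tm w).

Definition normal_form N T (G : grammar N T) : Prop :=
  forall A rhs, prod G A rhs ->
    (exists B C, rhs = [:: NT B; NT C]) \/ (exists a, rhs = [:: Tm a]) \/ rhs = [::].

(* Letters a_1,...,a_n are represented by i : 'I_n (pairwise distinct). *)
Definition block_word n (k : 'I_n -> nat) : seq 'I_n :=
  flatten [seq nseq (k i) i | i <- enum 'I_n].

Definition in_blocks n (w : seq 'I_n) : Prop :=
  exists k : 'I_n -> nat, w = block_word k.

Definition in_downclosure N n (G : grammar N 'I_n) (u : seq 'I_n) : Prop :=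
  exists w, inL G w /\ subseq u w.

Definition add_eps N T (G : grammar N T) : grammar N T :=
  Grammar (start G) (fun A rhs => prod G A rhs \/ rhs = [::]).

Definition Lset N T (G : grammar N T) (a : T) (A : N) : Prop :=
  derives (add_eps G) [:: NT A] [:: Tm a; NT A].

Definition Rset N T (G : grammar N T) (a : T) (A : N) : Prop :=
  derives (add_eps G) [:: NT A] [:: NT A; Tm a].

(* G^omega: terminals are the letters a_i^omega, again represented by T
   (letter a stands for a^omega); productions A -> a are removed. *)
Definition omega_grammar N T (G : grammar N T) : grammar N T :=
  Grammar (start G) (fun A rhs =>
    (prod (add_eps G) A rhs /\ (forall a, rhs <> [:: Tm a]))
    \/ (exists a, Lset G a A /\ rhs = [:: Tm a; NT A])
    \/ (exists a, Rset G a A /\ rhs = [:: NT A; Tm a])).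

(* Main.v *)
Require Import Defs.
From mathcomp Require Import all_boot zify.
Set Implicit Arguments.
Unset Strict Implicit.
Unset Printing Implicit Defensive.

Section Gen.
Variables (N T : Type).

Inductive Y (G : grammar N T) : sym N T -> seq (sym N T) -> Prop :=
| Yleaf s : Y G s [:: s]
| Y0 A : prod G A [::] -> Y G (NT A) [::]
| Y1 A x u : prod G A [:: x] -> Y G x u -> Y G (NT A) u
| Y2 A x y u v : prod G A [:: x; y] -> Y G x u -> Y G y v -> Y G (NT A) (u ++ v).

Implicit Types (x y z p q u v w : seq (sym N T)) (s : sym N T).

Fixpoint Yf (G : grammar N T) (x z : seq (sym N T)) : Prop :=
  match x with
  | [::] => z = [::]
  | s :: x' => exists z1 z2, z = z1 ++ z2 /\ Y G s z1 /\ Yf G x' z2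
  end.

Lemma Yf_refl G x : Yf G x x.
Proof. elim: x => [|s x IH] //=; exists [:: s], x; split => //; split => //; constructor. Qed.

Lemma Yf_cat G x1 x2 z :
  Yf G (x1 ++ x2) z <-> exists z1 z2, z = z1 ++ z2 /\ Yf G x1 z1 /\ Yf G x2 z2.
Proof.
elim: x1 z => [|s x1 IH] z /=.
  split; [move=> H; exists [::], z; done | by move=> [z1 [z2 [-> [-> H]]]]].
split.
  move=> [z1 [z2 [-> [H1 /IH [z3 [z4 [-> [H3 H4]]]]]]]].
  exists (z1 ++ z3), z4; rewrite catA; split => //; split => //.
  by exists z1, z3.
move=> [z1 [z2 [-> [[z3 [z4 [-> [H3 H4]]]] H2]]]].
exists z3, (z4 ++ z2); rewrite catA; split => //; split => //.
by apply/IH; exists z4, z2.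
Qed.

Definition small (G : grammar N T) := forall A rhs, prod G A rhs -> size rhs <= 2.

Lemma derives_Yf G : small G -> forall x z, derives G x z -> Yf G x z.
Proof.
move=> Hs x z; elim => {x z} [x|x y z Hst _ IH]; first exact: Yf_refl.
case: Hst IH => u v A w Hp.
move=> /Yf_cat [zu [zwv [-> [Hu /Yf_cat [zw [zv [-> [Hw Hv]]]]]]]].
apply/Yf_cat; exists zu, (zw ++ zv); split => //; split => //=.
exists zw, zv; split => //; split => //.
have := Hs _ _ Hp.
case: w Hp Hw => [|x0 [|y0 [|? ?]]] //= Hp.
- by move=> ->; constructor.
- move=> [z1 [z2 [-> [H1 ->]]]] _; rewrite cats0; exact: Y1 Hp H1.
- move=> [z1 [z2 [-> [H1 [z3 [z4 [-> [H3 ->]]]]]]]] _; rewrite cats0.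
  exact: Y2 Hp H1 H3.
Qed.

Lemma derives_Y G : small G -> forall s z, derives G [:: s] z -> Y G s z.
Proof.
move=> Hs s z /(derives_Yf Hs) /= [z1 [z2 [-> [H ->]]]]; by rewrite cats0.
Qed.

Lemma step_cat G (p q x y : seq (sym N T)) : step G x y -> step G (p ++ x ++ q) (p ++ y ++ q).
Proof.
case=> u v A w Hp.
have -> : p ++ (u ++ NT A :: v) ++ q = (p ++ u) ++ NT A :: (v ++ q)
  by rewrite -!catA.
have -> : p ++ (u ++ w ++ v) ++ q = (p ++ u) ++ w ++ (v ++ q) by rewrite -!catA.
by constructor.
Qed.

Lemma derives_trans G x y z : derives G x y -> derives G y z -> derives G x z.
Proof. elim=> {x y} [//|x y y' H _ IH] Hz; apply: der_step H (IH Hz). Qed.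

Lemma derives_ctx G (p q x y : seq (sym N T)) : derives G x y -> derives G (p ++ x ++ q) (p ++ y ++ q).
Proof.
elim=> {x y} [x|x y z H _ IH]; first exact: der_refl.
exact: der_step (step_cat p q H) IH.
Qed.

Lemma derives_cat G x (x' : seq (sym N T)) y (y' : seq (sym N T)) : derives G x x' -> derives G y y' ->
  derives G (x ++ y) (x' ++ y').
Proof.
move=> H1 H2; apply: (derives_trans (y := x' ++ y)).
  by have := derives_ctx [::] y H1; rewrite /=.
by have := derives_ctx x' [::] H2; rewrite /= !cats0.
Qed.

Lemma derives1 G A w : prod G A w -> derives G [:: NT A] w.
Proof.
move=> Hp; apply: der_step (der_refl _ _).
have := step_intro [::] [::] Hp; by rewrite /= cats0.
Qed.

Lemma Y_derives G s z : Y G s z -> derives G [:: s] z.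
Proof.
elim=> {s z} [s|A Hp|A x u Hp _ IH|A x y u v Hp _ IH1 _ IH2].
- exact: der_refl.
- exact: derives1.
- exact: derives_trans (derives1 Hp) IH.
- apply: derives_trans (derives1 Hp) _.
  by have := derives_cat IH1 IH2.
Qed.

Lemma Y_Tm G a u : Y G (Tm a) u -> u = [:: Tm a].
Proof. by inversion 1. Qed.

End Gen.
Section Seqs.
Variable T : eqType.
Implicit Types (ls s u v w : seq T).

Definition expand m ls : seq T := flatten [seq nseq m l | l <- ls].

Lemma expand_cat m s1 s2 : expand m (s1 ++ s2) = expand m s1 ++ expand m s2.
Proof. by rewrite /expand map_cat flatten_cat. Qed.

Lemma expand_cons m l s : expand m (l :: s) = nseq m l ++ expand m s.
Proof. by []. Qed.

Lemma expand_nil m : expand m [::] = [::].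
Proof. by []. Qed.

Lemma size_expand m s : size (expand m s) = m * size s.
Proof.
elim: s => [|l s IH]; first by rewrite muln0.
by rewrite expand_cons size_cat size_nseq IH mulnS.
Qed.

Lemma nseq_mono m1 m2 (a : T) : m1 <= m2 -> subseq (nseq m1 a) (nseq m2 a).
Proof.
move=> H; rewrite -(subnKC H) nseqD; exact: prefix_subseq.
Qed.

Lemma expand_mono m1 m2 s : m1 <= m2 -> subseq (expand m1 s) (expand m2 s).
Proof.
move=> H; elim: s => [|l s IH] //.
rewrite !expand_cons; apply: cat_subseq => //; exact: nseq_mono.
Qed.

Lemma subseq_split s u v : subseq s (u ++ v) ->
  exists s1 s2, s = s1 ++ s2 /\ subseq s1 u /\ subseq s2 v.
Proof.
elim: u s => [|a u IH] s /=.
  by move=> H; exists [::], s.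
case: s => [|b s]; first by move=> _; exists [::], [::]; rewrite ?sub0seq.
rewrite /= ; case: eqP => [->|_].
  move=> /IH [s1 [s2 [-> [H1 H2]]]]; exists (a :: s1), s2; split => //.
  by rewrite /= eqxx.
move=> /IH [s1 [s2 [E [H1 H2]]]]; exists s1, s2; split => //; split => //.
exact: subseq_trans H1 (subseq_cons _ _).
Qed.

Lemma take_nseq_cat k m (a : T) r : k <= m -> take k (nseq m a ++ r) = nseq k a.
Proof.
move=> H; rewrite take_cat size_nseq; case: ltnP => H2.
  by rewrite take_nseq // ltnW.
have -> : k = m by apply/eqP; rewrite eqn_leq H H2.
by rewrite subnn take0 cats0.
Qed.

Lemma drop_nseq_cat k m (a : T) r : k <= m -> drop k (nseq m a ++ r) = nseq (m - k) a ++ r.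
Proof.
move=> H; rewrite drop_cat size_nseq; case: ltnP => H2.
  by rewrite drop_nseq.
have -> : k = m by apply/eqP; rewrite eqn_leq H H2.
by rewrite subnn drop0.
Qed.

Lemma split_expand m ls e1 e2 : e1 ++ e2 = expand m ls ->
  ls = [::] \/ exists ls1 l ls2 r, [/\ ls = ls1 ++ l :: ls2, r <= m,
    e1 = expand m ls1 ++ nseq r l & e2 = nseq (m - r) l ++ expand m ls2].
Proof.
elim: ls e1 => [|l ls IH] e1; first by left.
move=> E; right; move: E; rewrite expand_cons => E.
case: (leqP (size e1) m) => Hs.
  have He1 : e1 = nseq (size e1) l.
    have := congr1 (take (size e1)) E; rewrite take_size_cat // => H1.
    rewrite {1}H1; exact: take_nseq_cat.
  exists [::], l, ls, (size e1); split => //.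
  have := congr1 (drop (size e1)) E; rewrite drop_size_cat // => ->.
  exact: drop_nseq_cat.
have Ht : take m e1 = nseq m l.
  by have := congr1 (take m) E; rewrite takel_cat ?(ltnW Hs) // take_nseq_cat.
have E' : drop m e1 ++ e2 = expand m ls.
  have := congr1 (drop m) E; rewrite drop_cat Hs => ->.
  by rewrite drop_nseq_cat // subnn.
have He1 : e1 = nseq m l ++ drop m e1 by rewrite -Ht cat_take_drop.
case: (IH _ E') => [Els|[ls1 [l' [ls2 [r [-> Hr Hd ->]]]]]].
  move: E'; rewrite Els; case: (drop m e1) He1 => // He1 _.
  by move: Hs; rewrite He1 cats0 size_nseq ltnn.
by exists (l :: ls1), l', ls2, r; rewrite expand_cons He1 Hd catA.
Qed.

Lemma map_split (S : Type) (f : T -> S) w (u v : seq S) : map f w = u ++ v ->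
  exists w1 w2, [/\ w = w1 ++ w2, u = map f w1 & v = map f w2].
Proof.
elim: u w => [|a u IH] w /=; first by move=> <-; exists [::], w.
case: w => [|b w] //= [<- /IH [w1 [w2 [-> -> ->]]]].
by exists (b :: w1), w2.
Qed.

End Seqs.

Section Dir1.
Variables (N : Type) (T : eqType) (G : grammar N T).
Hypothesis Hnf : normal_form G.
Hypothesis Hprod : all_productive G.

Local Notation G' := (add_eps G).
Local Notation Gw := (omega_grammar G).

Lemma small_eps : small G'.
Proof.
move=> A rhs [/Hnf [[B [C ->]]|[[a ->]|->]] | ->] //.
Qed.

Lemma small_omega : small Gw.
Proof.
move=> A rhs [[H _]|[[a [_ ->]]|[a [_ ->]]]] //; exact: small_eps H.
Qed.

Lemma derives_eps x y : derives G x y -> derives G' x y.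
Proof.
elim=> {x y} [x|x y z H _ IH]; first exact: der_refl.
apply: der_step IH; case: H => u v A w Hp; constructor; by left.
Qed.

Lemma Lpow a A K : Lset G a A ->
  derives G' [:: NT A] (map Tm (nseq K a) ++ [:: NT A]).
Proof.
move=> HL; elim: K => [|K IH]; first exact: der_refl.
apply: derives_trans HL _.
exact: (derives_cat (der_refl G' [:: Tm a]) IH).
Qed.

Lemma Rpow a A K : Rset G a A ->
  derives G' [:: NT A] ([:: NT A] ++ map Tm (nseq K a)).
Proof.
move=> HR; elim: K => [|K IH]; first by rewrite cats0; exact: der_refl.
apply: derives_trans HR _.
have -> : [:: NT A] ++ map Tm (nseq K.+1 a) = ([:: NT A] ++ map Tm (nseq K a)) ++ [:: Tm a].
  by rewrite -catA /= -[Tm a :: _]/(map Tm (a :: nseq K a)) -/(nseq K.+1 a) -[a :: nseq K a]/(nseq K.+1 a) -addn1 nseqD map_cat.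
exact: (derives_cat IH (der_refl G' [:: Tm a])).
Qed.

Lemma map_Tm1 (w : seq T) (s : sym N T) : map Tm w = [:: s] -> exists a, s = Tm a /\ w = [:: a].
Proof. by case: w => [|a [|? ?]] //= [<-]; exists a. Qed.

Lemma omega_expand K s z : Y Gw s z -> forall t A, z = map Tm t -> s = NT A ->
  derives G' [:: NT A] (map Tm (expand K t)).
Proof.
elim=> {s z} [s|A Hp|A x u Hp _ IH|A x y u v Hp Hx IHx Hy IHy] t A0 Ez Es.
- by case/esym/map_Tm1: Ez => a [Ea _]; rewrite Ea in Es.
- case: Es => <-; case: t Ez => // _; apply: derives1.
  by case: Hp => [[Hp _]|[[a [_ //]]|[a [_ //]]]].
- case: Es => <-.
  case: Hp => [[[/Hnf [[B [C //]]|[[a Ea]|//]]|//] Hn]|[[a [_ //]]|[a [_ //]]]].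
  by case: (Hn a Ea).
- case: Es => <-.
  case: Hp => [[Hp0 _]|[[a [HL [Ex Ey]]]|[a [HR [Ex Ey]]]]].
  + have [B [C [Ex Ey]]] : exists B C, x = NT B /\ y = NT C.
      by case: Hp0 => [/Hnf [[B [C [-> ->]]]|[[? //]|//]]|//]; exists B, C.
    subst x y.
    case: (map_split (esym Ez)) => t1 [t2 [Et Eu Ev]].
    have D1 := IHx _ _ Eu erefl; have D2 := IHy _ _ Ev erefl.
    apply: derives_trans (derives1 Hp0) _.
    rewrite Et expand_cat map_cat -cat1s.
    exact: derives_cat D1 D2.
  + subst x y; have Eu := Y_Tm Hx; rewrite Eu /= in Ez.
    case: t Ez => [|b t] //= [<- Ev].
    apply: derives_trans (Lpow K HL) _.
    rewrite expand_cons map_cat; apply: derives_cat; first exact: der_refl.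
    exact: IHy _ _ Ev erefl.
  + subst x y; have Ev := Y_Tm Hy; rewrite Ev in Ez.
    case: (map_split (esym Ez)) => t1 [t2 [Et Eu Ev']].
    case: t2 Et Ev' => [|b [|? ?]] //= Et [Eb].
    apply: derives_trans (Rpow K HR) _.
    rewrite Et expand_cat map_cat /= Eb expand_cons expand_nil cats0 -cat1s; apply: derives_cat; last exact: der_refl.
    exact: IHx _ _ Eu erefl.
Qed.

Lemma to_G s (w' : seq T) : Y G' s (map Tm w') ->
  exists w, Y G s (map Tm w) /\ subseq w' w.
Proof.
move Ez : (map Tm w') => z H; elim: H w' Ez => {s z}
  [s|A Hp|A x u Hp _ IH|A x y u v Hp _ IHx _ IHy] w' Ez.
- by exists w'; rewrite Ez; split => //; constructor.
- case: w' Ez => // _; case: Hp => [Hp|_].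
    by exists [::]; split => //; constructor.
  case: (Hprod A) => wa Hwa; exists wa; split; last exact: sub0seq.
  apply: derives_Y => //.
  by move=> B rhs /Hnf [[? [? ->]]|[[? ->]|->]].
- case: Hp => [Hp|//]; case: (IH _ Ez) => w [Hw Hs].
  by exists w; split => //; apply: Y1 Hp Hw.
- case: Hp => [Hp|//]; case: (map_split Ez) => w1 [w2 [-> Eu Ev]].
  case: (IHx _ (esym Eu)) => wa [Ha Hsa]; case: (IHy _ (esym Ev)) => wb [Hb Hsb].
  exists (wa ++ wb); split; last exact: cat_subseq.
  rewrite map_cat; exact: Y2 Hp Ha Hb.
Qed.

End Dir1.
Arguments map_Tm1 {N T w s}.

Section Dir2.
Variables (N : finType) (T : eqType) (G : grammar N T).
Hypothesis Hnf : normal_form G.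

Local Notation G' := (add_eps G).
Local Notation Gw := (omega_grammar G).

Lemma nf2 A x y : prod G' A [:: x; y] -> exists B C, x = NT B /\ y = NT C.
Proof. by case => [/Hnf [[B [C [-> ->]]]|[[? //]|//]]|//]; exists B, C. Qed.

Lemma nf1 A x : prod G' A [:: x] -> exists a, x = Tm a.
Proof. by case => [/Hnf [[B [C //]]|[[a [->]]|//]]|//]; exists a. Qed.

Lemma gw_eps A : derives Gw [:: NT A] [::].
Proof. apply: derives1; left; split; [by right | by []]. Qed.

Lemma g'_eps A : derives G' [:: NT A] [::].
Proof. apply: derives1; by right. Qed.

Lemma gw_bin A B C : prod G' A [:: NT B; NT C] -> derives Gw [:: NT A] [:: NT B; NT C].
Proof. by move=> Hp; apply: derives1; left; split. Qed.

Lemma gw_left A B C z : prod G' A [:: NT B; NT C] -> derives Gw [:: NT B] z ->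
  derives Gw [:: NT A] z.
Proof.
move=> Hp D; apply: derives_trans (gw_bin Hp) _.
rewrite -[z]cats0 -cat1s; exact: derives_cat D (gw_eps C).
Qed.

Lemma gw_right A B C z : prod G' A [:: NT B; NT C] -> derives Gw [:: NT C] z ->
  derives Gw [:: NT A] z.
Proof.
move=> Hp D; apply: derives_trans (gw_bin Hp) _.
rewrite -[z]cat0s -cat1s; exact: derives_cat (gw_eps B) D.
Qed.

Lemma g'_left A B C : prod G' A [:: NT B; NT C] -> derives G' [:: NT A] [:: NT B].
Proof.
move=> Hp; apply: derives_trans (derives1 Hp) _.
rewrite -[[:: NT B]]cats0 -cat1s; exact: derives_cat (der_refl _ _) (g'_eps C).
Qed.

Lemma g'_right A B C : prod G' A [:: NT B; NT C] -> derives G' [:: NT A] [:: NT C].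
Proof.
move=> Hp; apply: derives_trans (derives1 Hp) _.
rewrite -[[:: NT C]]cat0s -cat1s; exact: derives_cat (g'_eps B) (der_refl _ _).
Qed.

Lemma prune s (w : seq T) : Y G' s (map Tm w) -> forall w', subseq w' w ->
  (exists B, s = NT B) -> Y G' s (map Tm w').
Proof.
move Ez : (map Tm w) => z H; elim: H w Ez => {s z}
  [s|A Hp|A x u Hp Hx IH|A x y u v Hp _ IHx _ IHy] w Ez w' Hs [B EB].
- by case/map_Tm1: Ez => a [Ea _]; rewrite Ea in EB.
- by case: w Ez Hs => // _; rewrite subseq0 => /eqP ->; constructor.
- case: (nf1 Hp) => a Ex; subst x; have Eu := Y_Tm Hx; rewrite Eu in Ez.
  case/map_Tm1: Ez => _ [[<-] Ew]; subst w.
  case: w' Hs => [|b [|c l]].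
  + by move=> _; constructor; right.
  + by rewrite sub1seq inE => /eqP ->; exact: Y1 Hp (Yleaf _ _).
  + move/size_subseq; by rewrite /= ltnS ltn0.
- case: (nf2 Hp) => B1 [B2 [Ex Ey]]; subst x y.
  case: (map_split Ez) => w1 [w2 [Ew Eu Ev]]; subst w.
  case: (subseq_split Hs) => s1 [s2 [-> [H1 H2]]].
  rewrite map_cat; apply: Y2 Hp _ _.
  + exact: IHx _ (esym Eu) _ H1 (ex_intro _ B1 erefl).
  + exact: IHy _ (esym Ev) _ H2 (ex_intro _ B2 erefl).
Qed.

Lemma pick_letter B (w : seq T) a : Y G' (NT B) (map Tm w) -> a \in w ->
  derives G' [:: NT B] [:: Tm a].
Proof.
move=> H Ha; apply: Y_derives.
have := prune H (w' := [:: a]); rewrite sub1seq Ha => /(_ erefl); apply.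
by exists B.
Qed.

Definition pinv (ls : seq T) (C cur : N) : Prop :=
  (exists h t, ls = h :: t /\ derives G' [:: NT C] [:: Tm h; NT cur]) \/
  (exists t l, ls = rcons t l /\ derives G' [:: NT C] [:: NT cur; Tm l]).

Lemma pinv_comp ls C cur B : pinv ls C cur -> derives G' [:: NT cur] [:: NT B] ->
  pinv ls C B.
Proof.
move=> [[h [t [E D]]]|[t [l [E D]]]] D'.
  left; exists h, t; split => //; apply: derives_trans D _.
  exact: (derives_cat (der_refl G' [:: Tm h]) D').
right; exists t, l; split => //; apply: derives_trans D _.
exact: (derives_cat D' (der_refl G' [:: Tm l])).
Qed.

Definition thr (ls : seq T) (V : {set N}) := #|N|.+1 * size ls + (#|N| - #|V|).

Definition goalP (ls : seq T) (s : sym N T) (z : seq (sym N T)) : Prop :=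
  forall (w : seq T) cur (V : {set N}) d, z = map Tm w -> s = NT cur ->
  (forall C, C \in V -> pinv ls C cur) -> subseq (expand (2 ^ d) ls) w ->
  thr ls V <= d -> derives Gw [:: NT cur] (map Tm ls).


Lemma two_le d : 1 <= d -> 2 <= 2 ^ d.
Proof. case: d => // d _; rewrite expnS; have := expn_gt0 2 d; lia. Qed.

Lemma ls_nil d (ls w : seq T) : subseq (expand (2 ^ d) ls) w -> size w <= 1 -> 1 <= d ->
  ls = [::].
Proof.
move=> /size_subseq; rewrite size_expand => H1 H2 /two_le H3.
case: ls H1 => // a ls /=; nia.
Qed.

Lemma ar1 c a b v d : 0 < b -> c.+1 * (a + b.+1) + (c - v) <= d -> c.+1 * (a + 1) + c <= d.-1.
Proof. nia. Qed.
Lemma ar2 c a b v d : c.+1 * (a + b.+1) + (c - v) <= d -> c.+1 * b + c <= d.-1.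
Proof. nia. Qed.
Lemma ar3 c a b v d : c.+1 * (a + b.+1) + (c - v) <= d -> c.+1 * a + c <= d.-1.
Proof. nia. Qed.
Lemma ar4 c a b v d : 0 < a -> c.+1 * (a + b.+1) + (c - v) <= d -> c.+1 * b.+1 + c <= d.-1.
Proof. nia. Qed.

Lemma inner ls (Hne : ls != [::])
  (OIH : forall ls', size ls' < size ls -> forall s z, Y G' s z -> goalP ls' s z)
  s z : Y G' s z -> goalP ls s z.
Proof.
have Hsz : 0 < size ls by rewrite lt0n size_eq0.
elim=> {s z} [s|A Hp|A x u Hp Hx _|A x y u v Hp H1 IH1 H2 IH2]
  w cur V d Ez Es Hinv Hsub Hthr.
- by case/esym/map_Tm1: Ez => a [Ea _]; rewrite Ea in Es.
- have Hd : 1 <= d by move: Hthr; rewrite /thr; nia.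
  by case: w Ez Hsub => // _ Hsub; move: Hne; rewrite (ls_nil Hsub).
- have Hd : 1 <= d by move: Hthr; rewrite /thr; nia.
  case: (nf1 Hp) => a Ex; subst x; rewrite (Y_Tm Hx) in Ez.
  case/esym/map_Tm1: Ez => a' [_ Ew]; subst w.
  by move: Hne; rewrite (ls_nil Hsub).
case: Es => EA; subst A.
have Hd : 1 <= d by move: Hthr; rewrite /thr; nia.
have [HAV|HAV] := boolP (cur \in V).
  have tree := Y2 Hp H1 H2.
  have inv0 : forall ls' B, forall C, C \in (set0 : {set N}) -> pinv ls' C B.
    by move=> ? ? C; rewrite in_set0.
  case: (Hinv _ HAV) => [[h [t [E D]]]|[t [l [E D]]]].
    have Ht : size t < size ls by rewrite E.
    have IH := OIH t Ht _ _ tree w cur set0 d Ez erefl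
      (inv0 _ _).
    have IH' : derives Gw [:: NT cur] (map Tm t).
      apply: IH.
        apply: subseq_trans Hsub; rewrite E expand_cons; exact: suffix_subseq.
      move: Hthr; rewrite /thr cards0 subn0 E /=; lia.
    apply: derives_trans (derives1 (G := Gw) _) _; first by right; left; exists h.
    rewrite E; exact: (derives_cat (der_refl Gw [:: Tm h]) IH').
  have Ht : size t < size ls by rewrite E size_rcons.
  have IH := OIH t Ht _ _ tree w cur set0 d Ez erefl
    (inv0 _ _).
  have IH' : derives Gw [:: NT cur] (map Tm t).
    apply: IH.
      apply: subseq_trans Hsub; rewrite E -cats1 expand_cat; exact: prefix_subseq.
    move: Hthr; rewrite /thr cards0 subn0 E size_rcons; lia.
  apply: derives_trans (derives1 (G := Gw) _) _; first by right; right; exists l.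
  rewrite E -cats1 map_cat; exact: (derives_cat IH' (der_refl Gw [:: Tm l])).
case: (nf2 Hp) => B1 [B2 [Ex Ey]]; subst x y.
case: (map_split (esym Ez)) => w1 [w2 [Ew Eu Ev]]; subst w.
have Hm : 2 ^ d = 2 ^ d.-1 + 2 ^ d.-1.
  by case: d Hd {Hthr Hsub} => // d' _; rewrite expnS mul2n addnn.
move: Hm; set m2 := 2 ^ d.-1 => Hm.
case: (subseq_split Hsub) => e1 [e2 [Ee [He1 He2]]].
case: (split_expand (esym Ee)) => [Els|[ls1 [l [ls2 [r [Els Hr Ee1 Ee2]]]]]].
  by rewrite Els in Hne.
have Dl := g'_left Hp; have Dr := g'_right Hp.
have Hinv_l : forall C, C \in V -> pinv ls C B1 by move=> C HC; exact: pinv_comp (Hinv C HC) Dl.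
have Hinv_r : forall C, C \in V -> pinv ls C B2 by move=> C HC; exact: pinv_comp (Hinv C HC) Dr.
have Hcard : #|cur |: V| <= #|N| := max_card _.
move: Hcard; rewrite cardsU1 HAV /= => Hcard.
have inv0 : forall ls' B, forall C, C \in (set0 : {set N}) -> pinv ls' C B.
  by move=> ? ? C; rewrite in_set0.
have Hsz' : size ls = size ls1 + (size ls2).+1 by rewrite Els size_cat.
case: (leqP m2 r) => Hr2.
  case: (eqVneq ls2 [::]) => [E2|Hne2].
    case: (eqVneq r (2 ^ d)) => [Er|Hrm].
      apply: gw_left Hp _; apply: IH1 Eu erefl Hinv_l _ Hthr.
      have <- : e1 = expand (2 ^ d) ls.
        by rewrite Ee1 Er Els E2 expand_cat expand_cons expand_nil cats0.
      exact: He1.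
    have Hl : l \in w2.
      apply: (mem_subseq He2); rewrite Ee2 E2 expand_nil cats0 mem_nseq subn_gt0.
      by rewrite eqxx andbT ltn_neqAle Hrm Hr.
    have Dpl := pick_letter (eq_ind _ _ H2 _ Ev) Hl.
    have Dn : derives G' [:: NT cur] [:: NT B1; Tm l].
      apply: derives_trans (derives1 Hp) _.
      exact: (derives_cat (der_refl G' [:: NT B1]) Dpl).
    apply: gw_left Hp _; apply: (IH1 w1 B1 (cur |: V) d.-1) Eu erefl _ _ _.
    + move=> C; rewrite in_setU1 => /orP [/eqP ->|HC]; last exact: Hinv_l.
      by right; exists ls1, l; split => //; rewrite Els E2 cats1.
    + apply: subseq_trans He1; rewrite Els E2 Ee1 expand_cat expand_cons expand_nil cats0.
      apply: cat_subseq; [apply: expand_mono; lia | exact: nseq_mono].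
    + move: Hthr; rewrite /thr cardsU1 HAV /=; lia.
  have IHa := OIH (ls1 ++ [:: l]) _ _ _ H1 w1 B1 set0 d.-1 Eu erefl (inv0 _ _) _ _.
  have IHb := OIH ls2 _ _ _ H2 w2 B2 set0 d.-1 Ev erefl (inv0 _ _) _ _.
  have Hs2 : 0 < size ls2 by rewrite lt0n size_eq0.
  rewrite Els; apply: derives_trans (gw_bin Hp) _.
  have -> : map (@Tm N T) (ls1 ++ l :: ls2) = map Tm (ls1 ++ [:: l]) ++ map Tm ls2.
    by rewrite -map_cat -catA.
  change [:: @NT N T B1; NT B2] with ([:: @NT N T B1] ++ [:: @NT N T B2]).
  apply: derives_cat.
    apply: IHa; first by rewrite size_cat /=; lia.
      apply: subseq_trans He1; rewrite Ee1 expand_cat expand_cons expand_nil cats0.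
      apply: cat_subseq; [apply: expand_mono; lia | exact: nseq_mono].
    rewrite /thr cards0 subn0 size_cat /=; move: Hthr; rewrite /thr Hsz'; exact: ar1.
  apply: IHb; first lia.
    apply: subseq_trans He2; rewrite Ee2; apply: subseq_trans (suffix_subseq _ _).
    apply: expand_mono; lia.
  rewrite /thr cards0 subn0; move: Hthr; rewrite /thr Hsz'; exact: ar2.
case: (eqVneq ls1 [::]) => [E1|Hne1].
  case: (eqVneq r 0) => [Er|Hr0].
    apply: gw_right Hp _; apply: IH2 Ev erefl Hinv_r _ Hthr.
    have -> : expand (2 ^ d) ls = e2 by rewrite Ee2 Er subn0 Els E1.
    exact: He2.
  have Hl : l \in w1.
    apply: (mem_subseq He1); rewrite Ee1 E1 expand_nil /= mem_nseq lt0n Hr0.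
    by rewrite eqxx.
  have Dpl := pick_letter (eq_ind _ _ H1 _ Eu) Hl.
  have Dn : derives G' [:: NT cur] [:: Tm l; NT B2].
    apply: derives_trans (derives1 Hp) _.
    exact: (derives_cat Dpl (der_refl G' [:: NT B2])).
  apply: gw_right Hp _; apply: (IH2 w2 B2 (cur |: V) d.-1) Ev erefl _ _ _.
  + move=> C; rewrite in_setU1 => /orP [/eqP ->|HC]; last exact: Hinv_r.
    by left; exists l, ls2; split => //; rewrite Els E1.
  + apply: subseq_trans He2; rewrite Els E1 Ee2 /= expand_cons.
    apply: cat_subseq; [apply: nseq_mono; lia | apply: expand_mono; lia].
  + move: Hthr; rewrite /thr cardsU1 HAV /=; lia.
have IHa := OIH ls1 _ _ _ H1 w1 B1 set0 d.-1 Eu erefl (inv0 _ _) _ _.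
have IHb := OIH (l :: ls2) _ _ _ H2 w2 B2 set0 d.-1 Ev erefl (inv0 _ _) _ _.
have Hs1 : 0 < size ls1 by rewrite lt0n size_eq0.
rewrite Els; apply: derives_trans (gw_bin Hp) _.
rewrite map_cat.
change [:: @NT N T B1; NT B2] with ([:: @NT N T B1] ++ [:: @NT N T B2]); apply: derives_cat.
  apply: IHa; first lia.
    apply: subseq_trans He1; rewrite Ee1; apply: subseq_trans (prefix_subseq _ _).
    apply: expand_mono; lia.
  rewrite /thr cards0 subn0; move: Hthr; rewrite /thr Hsz'; exact: ar3.
apply: IHb; first by rewrite /=; lia.
  apply: subseq_trans He2; rewrite Ee2 expand_cons.
  apply: cat_subseq; [apply: nseq_mono; lia | apply: expand_mono; lia].
rewrite /thr cards0 subn0 /=; move: Hthr; rewrite /thr Hsz'; exact: ar4.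
Qed.

Lemma claim k : forall ls, size ls <= k -> forall s z, Y G' s z -> goalP ls s z.
Proof.
elim: k => [|k IHk] ls Hls s z t.
  by case: ls Hls => // _ w cur *; exact: gw_eps.
case: (eqVneq ls [::]) => [->|Hne].
  by move=> w cur *; exact: gw_eps.
apply: inner Hne _ _ _ t => ls' Hlt s' z' t'; apply: IHk => //; lia.
Qed.

End Dir2.

Lemma bw_sub n (k : 'I_n -> nat) K (ls : seq 'I_n) : (forall i, k i <= K) ->
  subseq (flatten [seq nseq (k i) i | i <- ls]) (expand K ls).
Proof.
move=> HK; elim: ls => [|a ls IH] //=.
rewrite expand_cons; apply: cat_subseq => //; exact: nseq_mono.
Qed.

Theorem mainTheorem11 (N : finType) (n : nat) (G : grammar N 'I_n)
  (Hprod : all_productive G)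
  (Hnf : normal_form G)
  (Hbl : forall w, inL G w -> in_blocks w) :
  inL (omega_grammar G) (enum 'I_n) <->
  (forall k : 'I_n -> nat, in_downclosure G (block_word k)).
Proof.
split.
  move=> H k.
  have T1 := derives_Y (small_omega Hnf) H.
  have D := omega_expand Hnf (\max_i k i) T1 erefl erefl.
  have T2 := derives_Y (small_eps Hnf) D.
  case: (to_G Hnf Hprod T2) => w [Tw Hw].
  exists w; split; first exact: Y_derives Tw.
  apply: subseq_trans Hw; apply: bw_sub => i; exact: leq_bigmax.
move=> H.
set d := thr (enum 'I_n) (set0 : {set N}).
case: (H (fun _ => 2 ^ d)) => w [Hw Hs].
have T1 := derives_Y (small_eps Hnf) (derives_eps Hw).
apply: (claim Hnf (leqnn _) T1 (V := set0) erefl erefl _ Hs (leqnn _)).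
by move=> C; rewrite in_set0.
Qed.
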